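(* Let $\mu$ be a probability measure with bounded support contained in $[0,\infty)$, and let $b=\sup\operatorname{supp}\mu$. For $q\in[0,1]$ and $x>b$ define $$T_2(x;q)=\frac{\varphi_\mu'(x;q)}{\varphi_\mu(x;q)\,\varphi_\mu(x;1)}.$$ Then for every fixed $x>b$ and every $q\in[0,1]$, $$\frac{\partial T_2}{\partial x}(x;q)\ \ge\ \frac{\partial T_2}{\partial x}(x;0).$$
   Context: For $s\in[0,1]$ and $x>b$, set $\varphi_\mu(x;s)=s\int\frac{x}{x^2-t^2}\,d\mu(t)+\frac{1-s}{x}$. Here $\varphi_\mu'(x;s)$ denotes the derivative in $x$, namely $\varphi_\mu'(x;s)=-\big(s\int\frac{x^2+t^2}{(x^2-t^2)^2}\,d\mu(t)+\frac{1-s}{x^2}\big)$. *)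

(* Defs.v *)
From HB Require Import structures.
From mathcomp Require Import all_boot all_order all_algebra.
From mathcomp Require Import all_classical all_reals all_analysis.
Set Implicit Arguments. Unset Strict Implicit. Unset Printing Implicit Defensive.
Import Order.TTheory GRing.Theory Num.Theory.
Import numFieldNormedType.Exports.
Local Open Scope classical_set_scope.
Local Open Scope ring_scope.

(* Support of a measure on the real line: points all of whose open
   neighbourhoods have positive measure (= smallest closed set of full measure). *)
Definition msupport (R : realType) (mu : {measure set R -> \bar R}) : set R :=
  [set x | forall e : R, 0 < e -> (0 < mu (ball x e))%E].

Definition phi (R : realType) (mu : {measure set R -> \bar R}) (x s : R) : R :=
  s * Rintegral mu setT (fun t => x / (x ^+ 2 - t ^+ 2)) + (1 - s) / x.

Definition dphi (R : realType) (mu : {measure set R -> \bar R}) (x s : R) : R :=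
  - (s * Rintegral mu setT (fun t => (x ^+ 2 + t ^+ 2) / (x ^+ 2 - t ^+ 2) ^+ 2)
     + (1 - s) / x ^+ 2).

Definition T2 (R : realType) (mu : {measure set R -> \bar R}) (x q : R) : R :=
  dphi mu x q / (phi mu x q * phi mu x 1).

(* Main.v *)
Require Import Defs.
From HB Require Import structures.
From mathcomp Require Import all_boot all_order all_algebra.
From mathcomp Require Import all_classical all_reals all_analysis.
From mathcomp Require Import ring lra measurable_realfun.
Import Order.TTheory GRing.Theory Num.Theory.
Import numFieldNormedType.Exports.
Local Open Scope classical_set_scope.
Local Open Scope ring_scope.
Lemma null_compl (R : realType) (mu : probability R R) (c : R) :
  (forall t, msupport mu t -> -c <= t <= c) ->
  mu.-negligible (~` `[-c, c]%classic).
Proof.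
move=> hs.
pose F (n : nat) : set R :=
  match (unpickle n : option (rat * rat)) with
  | Some pr => if mu (ball (ratr pr.1 : R) (ratr pr.2 : R)) == 0%E
               then ball (ratr pr.1 : R) (ratr pr.2 : R) else set0
  | None => set0 end.
apply: (@negligibleS _ _ _ _ (\bigcup_n F n)); last first.
  apply: negligible_bigcup => n; rewrite /F.
  case: (unpickle n) => [[p r]|]; last exact: negligible_set0.
  case: ifPn => [/eqP h|_]; last exact: negligible_set0.
  by exists (ball (ratr (p, r).1 : R) (ratr (p, r).2 : R)); split => //; exact: measurable_realfun.measurable_ball.
move=> t /= tK.
have : ~ msupport mu t by move=> /hs h; apply: tK; rewrite /= in_itv.
rewrite /msupport /= => /existsNP[e /not_implyP[e0 /negP]].
rewrite -leNgt => me.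
have me0 : mu (ball t e) = 0%E by apply/eqP; rewrite eq_le me measure_ge0.
have [p] := @rat_in_itvoo R (t - e / 4) (t + e / 4) ltac:(lra).
rewrite in_itv /= => /andP[p1 p2].
have [r] := @rat_in_itvoo R (e / 4) (e / 2) ltac:(lra).
rewrite in_itv /= => /andP[r1 r2].
exists (pickle (p, r)); first by [].

rewrite /F pickleK.
change ((if mu (ball (ratr p : R) (ratr r : R)) == 0%E then ball (ratr p : R) (ratr r : R) else set0) t).
have sub : ball (ratr p : R) (ratr r : R) `<=` ball t e.
  move=> z; rewrite /ball /= => hz.
  rewrite (_ : t - z = (t - ratr p) + (ratr p - z)); last by rewrite addrA subrK.
  apply: (le_lt_trans (ler_normD _ _)).
  have : `|t - ratr p| < e / 4 by rewrite ltr_norml; apply/andP; split; lra.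
  move=> h1; lra.
have -> : mu (ball (ratr p : R) (ratr r : R)) == 0%E.
  rewrite eq_le measure_ge0 andbT -me0.
  by apply: le_measure => //; rewrite inE; exact: measurable_realfun.measurable_ball.
rewrite /ball /= ltr_norml; apply/andP; split; lra.
Qed.

Lemma measurable_inv (R : realType) : measurable_fun [set: R] (@GRing.inv R).
Proof.
rewrite -(setUv [set (0:R)]).
apply/measurable_funU => //; first exact: measurableC.
split; first exact: measurable_fun_set1.
apply: measurable_realfun.open_continuous_measurable_fun.
  rewrite openC; apply: accessible_closed_set1; apply: hausdorff_accessible; exact: Rhausdorff.
move=> x; rewrite inE /= => /eqP x0; exact: inv_continuous.
Qed.

Lemma mfun_div (R : realType) (p q : R -> R) :
  measurable_fun setT p -> measurable_fun setT q ->
  measurable_fun setT (fun t => p t / q t).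
Proof.
move=> mp mq; apply: measurable_realfun.measurable_funM => //.
exact: (measurableT_comp (measurable_inv R) mq).
Qed.

Lemma mfun_poly (R : realType) (a b : R) (n : nat) :
  measurable_fun setT (fun t : R => a + b * t ^+ n).
Proof.
apply: measurable_realfun.measurable_funD => //; apply: measurable_realfun.measurable_funM => //;
  exact: measurable_realfun.exprn_measurable.
Qed.

Lemma RintT_K (R : realType) (mu : probability R R) (c : R) (h : R -> R) :
  mu.-negligible (~` `[-c, c]%classic) -> measurable_fun setT h ->
  Rintegral mu setT h = Rintegral mu `[-c, c]%classic h.
Proof.
move=> nK mh; rewrite [RHS]Rintegral_mkcond; congr fine.
apply: ae_eq_integral => //.
- exact/measurable_EFinP.
- apply/measurable_EFinP; apply/(measurable_restrictT _ _).1 => //.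
  exact: measurable_funTS.
- apply: negligibleS nK => t /= ht; apply: contra_not ht => Kt _.
  by rewrite patchE mem_set.
Qed.

Lemma int_K (R : realType) (mu : probability R R) (c M : R) (h : R -> R) :
  measurable_fun setT h -> (forall t, -c <= t <= c -> `|h t| <= M) ->
  mu.-integrable `[-c, c]%classic (EFin \o h).
Proof.
move=> mh hb; apply: measurable_bounded_integrable => //.
- by rewrite (le_lt_trans (probability_le1 _ _))// ltry.
- exact: measurable_funTS.
- rewrite /bounded_near; near=> M0 => t /= Kt.
  apply: (le_trans (hb t _)); first by move: Kt; rewrite /= in_itv.
  near: M0; apply: nbhs_pinfty_ge => //; exact: num_real.
Unshelve. all: end_near. Qed.
Definition f0 {R : realType} (y t : R) := y / (y ^+ 2 - t ^+ 2).
Definition f1 {R : realType} (y t : R) := (y ^+ 2 + t ^+ 2) / (y ^+ 2 - t ^+ 2) ^+ 2.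
Definition f2 {R : realType} (y t : R) :=
  2 * y * (y ^+ 2 + 3 * t ^+ 2) / (y ^+ 2 - t ^+ 2) ^+ 3.
Definition fg {R : realType} (y t : R) :=
  (y ^+ 2 + t ^+ 2) ^+ 2 / (y * (y ^+ 2 - t ^+ 2) ^+ 3).

Lemma ratio_bound (R : realType) (a b N m : R) :
  0 < m -> m <= b -> `|a| <= N -> `|a / b| <= N / m.
Proof.
move=> m0 mb aN; have b0 : 0 < b := lt_le_trans m0 mb.
rewrite normrM normfV (gtr0_norm b0).
apply: ler_pM => //; first by rewrite invr_ge0 ltW.
by rewrite lef_pV2 // posrE.
Qed.

Lemma bfacts (R : realType) (c u v y t : R) :
  0 <= c -> c < u -> u <= y -> y <= v -> -c <= t -> t <= c ->
  [/\ 0 < u ^+ 2 - c ^+ 2, t ^+ 2 <= c ^+ 2, u ^+ 2 <= y ^+ 2, y ^+ 2 <= v ^+ 2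
    & 0 <= t ^+ 2].
Proof.
move=> c0 cu uy yv ht1 ht2; split.
- rewrite (_ : u ^+ 2 - c ^+ 2 = (u - c) * (u + c)); last by ring.
  apply: mulr_gt0; lra.
- rewrite -subr_ge0 (_ : c ^+ 2 - t ^+ 2 = (c - t) * (c + t)); last by ring.
  apply: mulr_ge0; lra.
- rewrite -subr_ge0 (_ : y ^+ 2 - u ^+ 2 = (y - u) * (y + u)); last by ring.
  apply: mulr_ge0; lra.
- rewrite -subr_ge0 (_ : v ^+ 2 - y ^+ 2 = (v - y) * (v + y)); last by ring.
  apply: mulr_ge0; lra.
- exact: sqr_ge0.
Qed.

Lemma bnd_f0 (R : realType) (c u v y t : R) :
  0 <= c -> c < u -> u <= y -> y <= v -> -c <= t -> t <= c ->
  `|f0 y t| <= v / (u ^+ 2 - c ^+ 2).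
Proof.
move=> c0 cu uy yv ht1 ht2; have [m0 tc yu yv2 t2] := @bfacts R c u v y t c0 cu uy yv ht1 ht2.
apply: ratio_bound => //; first lra.
rewrite ger0_norm; lra.
Qed.

Lemma bnd_f1 (R : realType) (c u v y t : R) :
  0 <= c -> c < u -> u <= y -> y <= v -> -c <= t -> t <= c ->
  `|f1 y t| <= (v ^+ 2 + c ^+ 2) / (u ^+ 2 - c ^+ 2) ^+ 2.
Proof.
move=> c0 cu uy yv ht1 ht2; have [m0 tc yu yv2 t2] := @bfacts R c u v y t c0 cu uy yv ht1 ht2.
apply: ratio_bound; first exact: exprn_gt0.
  apply: lerXn2r; rewrite ?nnegrE; lra.
rewrite ger0_norm; lra.
Qed.

Lemma bnd_f2 (R : realType) (c u v y t : R) :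
  0 <= c -> c < u -> u <= y -> y <= v -> -c <= t -> t <= c ->
  `|f2 y t| <= 2 * v * (v ^+ 2 + 3 * c ^+ 2) / (u ^+ 2 - c ^+ 2) ^+ 3.
Proof.
move=> c0 cu uy yv ht1 ht2; have [m0 tc yu yv2 t2] := @bfacts R c u v y t c0 cu uy yv ht1 ht2.
apply: ratio_bound; first exact: exprn_gt0.
  apply: lerXn2r; rewrite ?nnegrE; lra.
have h1 : y ^+ 2 + 3 * t ^+ 2 <= v ^+ 2 + 3 * c ^+ 2 by lra.
rewrite ger0_norm; last by apply: mulr_ge0; lra.
apply: ler_pM; lra.
Qed.

Lemma bnd_fg (R : realType) (c u v y t : R) :
  0 <= c -> c < u -> u <= y -> y <= v -> -c <= t -> t <= c ->
  `|fg y t| <= (v ^+ 2 + c ^+ 2) ^+ 2 / (u * (u ^+ 2 - c ^+ 2) ^+ 3).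
Proof.
move=> c0 cu uy yv ht1 ht2; have [m0 tc yu yv2 t2] := @bfacts R c u v y t c0 cu uy yv ht1 ht2.
apply: ratio_bound.
- apply: mulr_gt0; [lra | exact: exprn_gt0].
- apply: ler_pM; [lra | exact/ltW/exprn_gt0 | lra |].
  apply: lerXn2r; rewrite ?nnegrE; lra.
rewrite ger0_norm; last by apply: exprn_ge0; lra.
apply: lerXn2r; rewrite ?nnegrE; lra.
Qed.

Lemma den_pos (R : realType) (c u v y t : R) :
  0 <= c -> c < u -> u <= y -> y <= v -> -c <= t -> t <= c ->
  0 < y ^+ 2 - t ^+ 2.
Proof.
move=> c0 cu uy yv ht1 ht2; have [m0 tc yu yv2 t2] := @bfacts R c u v y t c0 cu uy yv ht1 ht2.
lra.
Qed.

Lemma mq (R : realType) (y : R) : measurable_fun setT (fun t : R => y ^+ 2 - t ^+ 2).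
Proof. by apply: measurable_funB; [exact: measurable_cst | exact: exprn_measurable]. Qed.
Lemma mp (R : realType) (y a : R) : measurable_fun setT (fun t : R => y ^+ 2 + a * t ^+ 2).
Proof.
apply: measurable_funD; first exact: measurable_cst.
by apply: measurable_funM; [exact: measurable_cst | exact: exprn_measurable].
Qed.
Lemma mp1 (R : realType) (y : R) : measurable_fun setT (fun t : R => y ^+ 2 + t ^+ 2).
Proof.
apply: measurable_funD; first exact: measurable_cst.
exact: exprn_measurable.
Qed.

Lemma mf0 (R : realType) (y : R) : measurable_fun setT (f0 y).
Proof. apply: mfun_div; [exact: measurable_cst | exact: mq]. Qed.
Lemma mf1 (R : realType) (y : R) : measurable_fun setT (f1 y).
Proof.
apply: mfun_div; last by apply: measurable_funX; exact: mq.
exact: mp1.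
Qed.
Lemma mf2 (R : realType) (y : R) : measurable_fun setT (f2 y).
Proof.
apply: mfun_div; last by apply: measurable_funX; exact: mq.
by apply: measurable_funM; [exact: measurable_cst | exact: mp].
Qed.
Lemma mfg (R : realType) (y : R) : measurable_fun setT (fg y).
Proof.
apply: mfun_div; first by apply: measurable_funX; exact: mp1.
by apply: measurable_funM; [exact: measurable_cst | apply: measurable_funX; exact: mq].
Qed.

Lemma Rint_lin4 (R : realType) (mu : probability R R) (K : set R) (h0 h1 h2 h3 : R -> R)
    (k0 k1 k2 k3 : R) : measurable K ->
  mu.-integrable K (EFin \o h0) -> mu.-integrable K (EFin \o h1) ->
  mu.-integrable K (EFin \o h2) -> mu.-integrable K (EFin \o h3) ->
  Rintegral mu K (fun t => k0 * h0 t + k1 * h1 t + k2 * h2 t + k3 * h3 t) =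
  k0 * Rintegral mu K h0 + k1 * Rintegral mu K h1 + k2 * Rintegral mu K h2 +
  k3 * Rintegral mu K h3.
Proof.
move=> mK i0 i1 i2 i3.
have iZ : forall (k : R) h, mu.-integrable K (EFin \o h) ->
    mu.-integrable K (EFin \o (fun t => k * h t)).
  move=> k h ih; apply: (eq_integrable mK _ _ _ (integrableZl mK k ih)).
  by move=> t _ /=; rewrite EFinM.
have iD : forall h h', mu.-integrable K (EFin \o h) -> mu.-integrable K (EFin \o h') ->
    mu.-integrable K (EFin \o (fun t => h t + h' t)).
  move=> h h' ih ih'; apply: (eq_integrable mK _ _ _ (integrableD mK ih ih')).
  by move=> t _ /=; rewrite EFinD.
have j0 := iZ k0 _ i0; have j1 := iZ k1 _ i1.
have j2 := iZ k2 _ i2; have j3 := iZ k3 _ i3.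
have j01 := iD _ _ j0 j1; have j012 := iD _ _ j01 j2.
rewrite (RintegralD mK j012 j3) (RintegralD mK j01 j2) (RintegralD mK j0 j1).
by rewrite !RintegralZl.
Qed.

Lemma dui (R : realType) (mu : probability R R) (c u v a : R) (f df : R -> R -> R) (Mf Mdf : R) :
  u < a < v ->
  (forall y, measurable_fun setT (f y)) ->
  (forall y t, u < y < v -> -c <= t <= c -> `|f y t| <= Mf) ->
  (forall y t, u < y < v -> -c <= t <= c -> is_derive y 1 (f ^~ t) (df y t)) ->
  (forall y t, u < y < v -> -c <= t <= c -> `|df y t| <= Mdf) ->
  is_derive a 1 (fun y => Rintegral mu `[-c, c]%classic (f y))
    (Rintegral mu `[-c, c]%classic (df a)).
Proof.
move=> Ia mf bf hd bd.
have mK : measurable (`[-c, c]%classic : set R) by exact: measurable_itv.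
have Ia' : `]u, v[%classic a by rewrite /= in_itv.
have intf : forall y, `]u, v[%classic y -> mu.-integrable `[-c, c]%classic (EFin \o f y).
  move=> y; rewrite /= in_itv /= => Iy; apply: (@int_K R mu c Mf) => // t ht.
  exact: bf.
have derf : forall y t, `]u, v[%classic y -> `[-c, c]%classic t -> derivable (f ^~ t) y 1.
  move=> y t; rewrite /= !in_itv /= => Iy Kt; by case: (hd y t Iy Kt).
have G0 : forall t : R, 0 <= (fun _ => `|Mdf|) t by move=> t; exact: normr_ge0.
have intG : mu.-integrable `[-c, c]%classic (EFin \o (fun _ : R => `|Mdf|)).
  exact: finite_measure_integrable_cst.
have Gub : forall y t, `]u, v[%classic y -> `[-c, c]%classic t ->
    `|partial1of2 f y t| <= (fun _ => `|Mdf|) t.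
  move=> y t; rewrite /= !in_itv /= => Iy Kt.
  rewrite /partial1of2 derive1E (@derive_val _ _ _ _ _ _ _ (hd y t Iy Kt)).
  exact: (le_trans (bd y t Iy Kt) (ler_norm _)).
have D1 := differentiation_under_integral mK Ia' intf derf G0 intG Gub.
have D2 := derivable_under_integral mK Ia' intf derf G0 intG Gub.
apply: DeriveDef => //.
rewrite -derive1E D1; apply: eq_Rintegral => t; rewrite inE /= in_itv /= => Kt.
by rewrite /partial1of2 derive1E (@derive_val _ _ _ _ _ _ _ (hd a t Ia Kt)).
Qed.

Lemma is_derive_div (R : realType) (f g : R -> R) (x df dg : R) :
  g x != 0 -> is_derive x 1 f df -> is_derive x 1 g dg ->
  is_derive x 1 (fun y => f y / g y) ((df * g x - f x * dg) / (g x)^+2).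
Proof.
move=> g0 Hf Hg.
have Hv := is_deriveV g0 Hg.
have H := is_deriveM Hf Hv.
apply: is_derive_eq.
rewrite -![_ *: _]/(_ * _); field; exact: g0.
Qed.

Definition dT {R : realType} (x q a b d : R) :=
  let P := q * a + (1 - q) / x in
  let N := q * b + (1 - q) / x ^+ 2 in
  let N' := - (q * d) - 2 * (1 - q) / x ^+ 3 in
  - (N' * P * a + N ^+ 2 * a + N * P * b) / (P ^+ 2 * a ^+ 2).

Lemma TT_derive (R : realType) (A B : R -> R) (x q b d : R) :
  x != 0 -> B x = b -> is_derive x 1 A (-b) -> is_derive x 1 B (-d) ->
  q * A x + (1 - q) / x != 0 -> A x != 0 ->
  is_derive x 1 (fun y => - (q * B y + (1 - q) / y ^+ 2) / ((q * A y + (1 - q) / y) * A y))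
    (dT x q (A x) b d).
Proof.
move=> x0 Bx hA hB P0 A0.
have hid : is_derive x 1 (fun y : R => y) 1 by exact: is_derive_id.
have hi1 : is_derive x 1 (fun y : R => (1 - q) / y) ((0 * x - (1 - q) * 1) / x ^+ 2).
  exact: (@is_derive_div R (fun _ => 1 - q) (fun y => y) x 0 1 x0 (is_derive_cst _ _ _) hid).
have hsq : is_derive x 1 (fun y : R => y ^+ 2) (2 * x).
  by apply: is_derive_eq; rewrite -?[_ *: _]/(_ * _) /=; ring.
have x20 : x ^+ 2 != 0 by rewrite expf_neq0.
have hi2 : is_derive x 1 (fun y : R => (1 - q) / y ^+ 2) ((0 * x ^+ 2 - (1 - q) * (2 * x)) / (x ^+ 2) ^+ 2).
  exact: (@is_derive_div R (fun _ => 1 - q) (fun y => y ^+ 2) x 0 (2 * x) x20 (is_derive_cst _ _ _) hsq).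
have hP : is_derive x 1 (fun y => q * A y + (1 - q) / y) (q * (- b) + (0 * x - (1 - q) * 1) / x ^+ 2).
  by apply: is_derive_eq; rewrite -?[_ *: _]/(_ * _).
have hN : is_derive x 1 (fun y => - (q * B y + (1 - q) / y ^+ 2))
    (- (q * (- d) + (0 * x ^+ 2 - (1 - q) * (2 * x)) / (x ^+ 2) ^+ 2)).
  by apply: is_derive_eq; rewrite -?[_ *: _]/(_ * _).
have hPA : is_derive x 1 (fun y => (q * A y + (1 - q) / y) * A y)
    ((q * (- b) + (0 * x - (1 - q) * 1) / x ^+ 2) * A x + (q * A x + (1 - q) / x) * (- b)).
  by apply: is_derive_eq; rewrite -?[_ *: _]/(_ * _) /=; ring.
have PA0 : (q * A x + (1 - q) / x) * A x != 0 by rewrite mulf_neq0.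
have H := @is_derive_div R _ _ x _ _ PA0 hN hPA.
apply: is_derive_eq.
have P0' : q * A x * x + (1 - q) != 0.
  rewrite (_ : q * A x * x + (1 - q) = (q * A x + (1 - q) / x) * x); first exact: mulf_neq0.
  by field.
rewrite /dT Bx /=; field.
by rewrite x0 A0 P0'.
Qed.

Lemma is_derive_p4 (R : realType) (x t : R) :
  is_derive x 1 (fun y : R => (y ^+ 2 - t ^+ 2) ^+ 2) (4 * x * (x ^+ 2 - t ^+ 2)).
Proof.
apply: is_derive_eq; rewrite -?[_ *: _]/(_ * _) /=; ring.
Qed.

Lemma der_f0 (R : realType) (y t : R) : y ^+ 2 - t ^+ 2 != 0 ->
  is_derive y 1 (f0 ^~ t) (- f1 y t).
Proof.
move=> h.
have h1 : is_derive y 1 (fun z : R => z) 1 by exact: is_derive_id.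
have h2 : is_derive y 1 (fun z : R => z ^+ 2 - t ^+ 2) (2 * y).
  by apply: is_derive_eq; rewrite -?[_ *: _]/(_ * _) /=; ring.
have H := @is_derive_div R _ _ y _ _ h h1 h2.
change (is_derive y 1 (fun z => z / (z ^+ 2 - t ^+ 2)) (- f1 y t)).
apply: is_derive_eq.
rewrite /f1; field; exact: h.
Qed.

Lemma der_f1 (R : realType) (y t : R) : y ^+ 2 - t ^+ 2 != 0 ->
  is_derive y 1 (f1 ^~ t) (- f2 y t).
Proof.
move=> h.
have h1 : is_derive y 1 (fun z : R => z ^+ 2 + t ^+ 2) (2 * y).
  by apply: is_derive_eq; rewrite -?[_ *: _]/(_ * _) /=; ring.
have h2 := @is_derive_p4 R y t.
have h' : (y ^+ 2 - t ^+ 2) ^+ 2 != 0 by rewrite expf_neq0.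
have H := @is_derive_div R _ _ y _ _ h' h1 h2.
change (is_derive y 1 (fun z => (z ^+ 2 + t ^+ 2) / (z ^+ 2 - t ^+ 2) ^+ 2) (- f2 y t)).
apply: is_derive_eq.
rewrite /f2; field; exact: h.
Qed.

Lemma final_ineq (R : realType) (x q a b d g : R) :
  0 < x -> 0 < a -> 0 <= q -> q <= 1 -> b ^+ 2 <= a * g ->
  0 <= x * d - b - x * g -> 0 <= x ^+ 2 * d + x * b - a - 2 * x ^+ 2 * g ->
  dT x 0 a b d <= dT x q a b d.
Proof.
move=> x0 a0 q0 q1 cs p1 p2.
have xn : x != 0 by rewrite gt_eqF.
have an : a != 0 by rewrite gt_eqF.
have Pp : 0 < q * a * x + (1 - q).
  have h : 0 <= q * a * x by rewrite !mulr_ge0 // ltW.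
  case: (ltrP q 1) => hq; first lra.
  have -> : q = 1 by lra.
  rewrite mul1r subrr addr0; exact: mulr_gt0.
have Pn : q * a * x + (1 - q) != 0 by rewrite gt_eqF.
set Q1 := x * a * d - a * b - x * b ^+ 2.
set Q2 := x ^+ 2 * a * d + x * a * b - 2 * x ^+ 2 * b ^+ 2 - a ^+ 2.
have key : dT x q a b d - dT x 0 a b d =
    q * ((1 - q) * Q1 + q * a * Q2) / ((q * a * x + (1 - q)) ^+ 2 * a ^+ 2).
  rewrite /dT /Q1 /Q2 /=; field.
  by rewrite xn an Pn.
have cs' : 0 <= a * g - b ^+ 2 by rewrite subr_ge0.
have hQ1 : 0 <= Q1.
  rewrite (_ : Q1 = a * (x * d - b - x * g) + x * (a * g - b ^+ 2)); last by rewrite /Q1; ring.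
  by apply: addr_ge0; apply: mulr_ge0 => //; exact: ltW.
have hQ2 : 0 <= Q2.
  rewrite (_ : Q2 = a * (x ^+ 2 * d + x * b - a - 2 * x ^+ 2 * g) + 2 * x ^+ 2 * (a * g - b ^+ 2));
    last by rewrite /Q2; ring.
  apply: addr_ge0; apply: mulr_ge0 => //; try exact: ltW.
  by apply: mulr_ge0 => //; exact: sqr_ge0.
rewrite -subr_ge0 key; apply: divr_ge0.
  apply: mulr_ge0 => //; apply: addr_ge0; apply: mulr_ge0 => //; try lra.
  by apply: mulr_ge0 => //; exact: ltW.
by apply: mulr_ge0; exact: sqr_ge0.
Qed.

Theorem mainTheorem13 (R : realType) (mu : probability R R) :
  (exists M : R, msupport mu `<=` [set t | 0 <= t <= M]) ->
  forall x q : R,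
    sup (msupport mu) < x -> 0 <= q <= 1 ->
    derivable (fun y => T2 mu y q) x 1 /\
    derivable (fun y => T2 mu y 0) x 1 /\
    derive1 (fun y => T2 mu y 0) x <= derive1 (fun y => T2 mu y q) x.
Proof.
move=> [M hM] x q hx /andP[q0 q1].
set b := sup (msupport mu) in hx.
pose c := (b + x) / 2.
have bc : b < c by rewrite /c; lra.
have cx : c < x by rewrite /c; lra.
have hs : forall t, msupport mu t -> -c <= t <= c.
  move=> t st; have /andP[t0 tM] := hM t st.
  have tb : t <= b.
    apply: sup_upper_bound => //; split; first by exists t.
    by exists M => s /hM /andP[].
  apply/andP; split; lra.
have nK := @null_compl R mu c hs.
set K := (`[-c, c]%classic : set R).
have mK : measurable K by exact: measurable_itv.
have fK : mu K \is a fin_num.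
  by rewrite ge0_fin_numE ?measure_ge0 // (le_lt_trans (probability_le1 _ mK)) ?ltry.
have muK : mu K = 1%E.
  have h := @probability_setC _ _ _ mu _ mK.
  rewrite (measure_negligible (measurableC mK) nK) -(fineK fK) -EFinB in h.
  case: h => h; rewrite -(fineK fK); congr EFin; lra.
have fmuK : fine (mu K) = 1 by rewrite muK.
have c0 : 0 <= c.
  rewrite leNgt; apply/negP => c0.
  have e : K = set0.
    apply/seteqP; split => t //=; rewrite /K /= in_itv /= => /andP[h1 h2]; lra.
  by move: muK; rewrite e measure0 => -[] h; lra.
have x0 : 0 < x by lra.
pose u := (c + x) / 2.
pose v := x + 1.
have cu : c < u by rewrite /u; lra.
have ux : u < x by rewrite /u; lra.
have xv : x < v by rewrite /v; lra.
have KE : forall t, K t -> -c <= t /\ t <= c.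
  by move=> t; rewrite /K /= in_itv /= => /andP[].
pose AK y := Rintegral mu K (f0 y).
pose BK y := Rintegral mu K (f1 y).
pose DK := Rintegral mu K (f2 x).
pose GK := Rintegral mu K (fg x).
have int0 : mu.-integrable K (EFin \o f0 x).
  apply: (@int_K R mu c (x / (x ^+ 2 - c ^+ 2))); first exact: mf0.
  move=> t /andP[h1 h2]; apply: (@bnd_f0 R c x x x t) => //; lra.
have int1 : mu.-integrable K (EFin \o f1 x).
  apply: (@int_K R mu c ((x ^+ 2 + c ^+ 2) / (x ^+ 2 - c ^+ 2) ^+ 2)); first exact: mf1.
  move=> t /andP[h1 h2]; apply: (@bnd_f1 R c x x x t) => //; lra.
have int2 : mu.-integrable K (EFin \o f2 x).
  apply: (@int_K R mu c (2 * x * (x ^+ 2 + 3 * c ^+ 2) / (x ^+ 2 - c ^+ 2) ^+ 3)); first exact: mf2.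
  move=> t /andP[h1 h2]; apply: (@bnd_f2 R c x x x t) => //; lra.
have int3 : mu.-integrable K (EFin \o fg x).
  apply: (@int_K R mu c ((x ^+ 2 + c ^+ 2) ^+ 2 / (x * (x ^+ 2 - c ^+ 2) ^+ 3))); first exact: mfg.
  move=> t /andP[h1 h2]; apply: (@bnd_fg R c x x x t) => //; lra.
have dA0 : is_derive x 1 AK (Rintegral mu K (fun t => - f1 x t)).
  apply: (@dui R mu c u v x f0 (fun y t => - f1 y t) (v / (u ^+ 2 - c ^+ 2))
     ((v ^+ 2 + c ^+ 2) / (u ^+ 2 - c ^+ 2) ^+ 2)).
  - by apply/andP; split.
  - exact: mf0.
  - move=> y t /andP[y1 y2] /andP[t1 t2]; apply: (@bnd_f0 R c u v y t) => //; lra.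
  - move=> y t /andP[y1 y2] /andP[t1 t2]; apply: der_f0; rewrite gt_eqF //.
    apply: (@den_pos R c u v y t) => //; lra.
  - move=> y t /andP[y1 y2] /andP[t1 t2]; rewrite normrN.
    apply: (@bnd_f1 R c u v y t) => //; lra.
have dA : is_derive x 1 AK (- BK x).
  suff <- : Rintegral mu K (fun t => - f1 x t) = - BK x by [].
  rewrite (@eq_Rintegral _ _ _ mu K (fun t => (-1) * f1 x t) (fun t => - f1 x t)); last first.
    by move=> t _; rewrite mulN1r.
  by rewrite RintegralZl // mulN1r.
have dB0 : is_derive x 1 BK (Rintegral mu K (fun t => - f2 x t)).
  apply: (@dui R mu c u v x f1 (fun y t => - f2 y t) ((v ^+ 2 + c ^+ 2) / (u ^+ 2 - c ^+ 2) ^+ 2)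
     (2 * v * (v ^+ 2 + 3 * c ^+ 2) / (u ^+ 2 - c ^+ 2) ^+ 3)).
  - by apply/andP; split.
  - exact: mf1.
  - move=> y t /andP[y1 y2] /andP[t1 t2]; apply: (@bnd_f1 R c u v y t) => //; lra.
  - move=> y t /andP[y1 y2] /andP[t1 t2]; apply: der_f1; rewrite gt_eqF //.
    apply: (@den_pos R c u v y t) => //; lra.
  - move=> y t /andP[y1 y2] /andP[t1 t2]; rewrite normrN.
    apply: (@bnd_f2 R c u v y t) => //; lra.
have dB : is_derive x 1 BK (- DK).
  suff <- : Rintegral mu K (fun t => - f2 x t) = - DK by [].
  rewrite (@eq_Rintegral _ _ _ mu K (fun t => (-1) * f2 x t) (fun t => - f2 x t)); last first.
    by move=> t _; rewrite mulN1r.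
  by rewrite RintegralZl // mulN1r.
have eT : forall q', (fun y => T2 mu y q') =
    (fun y => - (q' * BK y + (1 - q') / y ^+ 2) / ((q' * AK y + (1 - q') / y) * AK y)).
  move=> q'; apply/funext => y; rewrite /T2 /phi /dphi.
  have e0 : Rintegral mu setT (fun t => y / (y ^+ 2 - t ^+ 2)) = AK y := @RintT_K R mu c _ nK (@mf0 R y).
  have e1 : Rintegral mu setT (fun t => (y ^+ 2 + t ^+ 2) / (y ^+ 2 - t ^+ 2) ^+ 2) = BK y
    := @RintT_K R mu c _ nK (@mf1 R y).
  by rewrite e0 e1 subrr mul0r addr0 mul1r.
have xn : x != 0 by rewrite gt_eqF.
have dpos : forall t, K t -> 0 < x ^+ 2 - t ^+ 2.
  by move=> t /KE[t1 t2]; apply: (@den_pos R c x x x t) => //; lra.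
have dn : forall t, K t -> x ^+ 2 - t ^+ 2 != 0 by move=> t /dpos h; rewrite gt_eqF.
have Ax : 1 / x <= AK x.
  have e : Rintegral mu K (fun _ => 1 / x) = 1 / x by rewrite Rintegral_cst // fmuK mulr1.
  rewrite -[X in X <= _]e; apply: le_Rintegral => //.
    exact: finite_measure_integrable_cst.
  move=> t Kt; have dp := dpos t Kt.
  rewrite /f0 -subr_ge0 (_ : x / (x ^+ 2 - t ^+ 2) - 1 / x = t ^+ 2 / (x * (x ^+ 2 - t ^+ 2))).
    by apply: divr_ge0; [exact: sqr_ge0 | apply: mulr_ge0; lra].
  by field; rewrite xn dn.
have A0 : 0 < AK x by apply: lt_le_trans Ax; rewrite divr_gt0.
have An : AK x != 0 by rewrite gt_eqF.
have lin := @Rint_lin4 R mu K (f0 x) (f1 x) (f2 x) (fg x).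
have p1 : 0 <= x * DK - BK x - x * GK.
  have h := lin 0 (-1) x (-x) mK int0 int1 int2 int3.
  have : 0 <= Rintegral mu K (fun t => 0 * f0 x t + -1 * f1 x t + x * f2 x t + - x * fg x t).
    apply: Rintegral_ge0 => t Kt; have dp := dpos t Kt.
    rewrite (_ : _ + _ = 4 * x ^+ 2 * t ^+ 2 / (x ^+ 2 - t ^+ 2) ^+ 3).
      apply: divr_ge0; last by apply: exprn_ge0; lra.
      by apply: mulr_ge0; [apply: mulr_ge0; [lra | exact: sqr_ge0] | exact: sqr_ge0].
    by rewrite /f0 /f1 /f2 /fg; field; rewrite xn dn.
  rewrite h (_ : x * DK - BK x - x * GK = 0 * AK x + -1 * BK x + x * DK + - x * GK) //.
  by ring.
have p2 : 0 <= x ^+ 2 * DK + x * BK x - AK x - 2 * x ^+ 2 * GK.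
  have h := lin (-1) x (x ^+ 2) (- (2 * x ^+ 2)) mK int0 int1 int2 int3.
  have : 0 <= Rintegral mu K (fun t => -1 * f0 x t + x * f1 x t + x ^+ 2 * f2 x t +
      - (2 * x ^+ 2) * fg x t).
    apply: Rintegral_ge0 => t Kt; have dp := dpos t Kt.
    rewrite (_ : _ + _ = 4 * x * t ^+ 2 / (x ^+ 2 - t ^+ 2) ^+ 2).
      apply: divr_ge0; last by apply: exprn_ge0; lra.
      by apply: mulr_ge0; [apply: mulr_ge0; lra | exact: sqr_ge0].
    by rewrite /f0 /f1 /f2 /fg; field; rewrite xn dn.
  rewrite h (_ : x ^+ 2 * DK + x * BK x - AK x - 2 * x ^+ 2 * GK =
     -1 * AK x + x * BK x + x ^+ 2 * DK + - (2 * x ^+ 2) * GK) //.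
  by ring.
have cs : BK x ^+ 2 <= AK x * GK.
  pose l := BK x / AK x.
  have h := lin (l ^+ 2) (- (2 * l)) 0 1 mK int0 int1 int2 int3.
  have : 0 <= Rintegral mu K (fun t => l ^+ 2 * f0 x t + - (2 * l) * f1 x t + 0 * f2 x t +
      1 * fg x t).
    apply: Rintegral_ge0 => t Kt; have dp := dpos t Kt.
    rewrite (_ : _ + _ = x / (x ^+ 2 - t ^+ 2) *
        (l - (x ^+ 2 + t ^+ 2) / (x * (x ^+ 2 - t ^+ 2))) ^+ 2).
      by apply: mulr_ge0; [apply: divr_ge0; lra | exact: sqr_ge0].
    by rewrite /f0 /f1 /f2 /fg; field; rewrite xn dn.
  rewrite h (_ : l ^+ 2 * AK x + - (2 * l) * BK x + 0 * DK + 1 * GK =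
      (AK x * GK - BK x ^+ 2) / AK x); last by rewrite /l; field.
  move=> hh; rewrite -subr_ge0.
  rewrite (_ : AK x * GK - BK x ^+ 2 = AK x * ((AK x * GK - BK x ^+ 2) / AK x)); last by field.
  by apply: mulr_ge0 => //; exact: ltW.
have P0 : forall q', 0 <= q' -> q' <= 1 -> q' * AK x + (1 - q') / x != 0.
  move=> q' h0 h1; rewrite gt_eqF //.
  have ix : 0 < 1 / x by rewrite divr_gt0.
  have : 0 <= q' * AK x by apply: mulr_ge0 => //; exact: ltW.
  have : 0 <= (1 - q') / x by apply: divr_ge0; lra.
  case: (ltrP q' 1) => hq.
    have : 0 < (1 - q') / x by apply: divr_gt0; lra.
    lra.
  have -> : q' = 1 by lra.
  by rewrite mul1r subrr mul0r addr0.
have D1 := @TT_derive R AK BK x q (BK x) DK xn erefl dA dB (P0 q q0 q1) An.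
have D0 := @TT_derive R AK BK x 0 (BK x) DK xn erefl dA dB (P0 0 (lexx 0) ler01) An.
split; [|split].
- by rewrite eT; case: D1.
- by rewrite eT; case: D0.
rewrite !eT !derive1E (@derive_val _ _ _ _ _ _ _ D0) (@derive_val _ _ _ _ _ _ _ D1).
exact: (@final_ineq R x q (AK x) (BK x) DK GK x0 A0 q0 q1 cs p1 p2).
Qed.
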